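(* Let $J\in\mathbb R_{\ge0}^{n\times m}$ (entrywise nonnegative), $h\in\mathbb R^n$, $g\in\mathbb R^m$ be arbitrary otherwise, and let $\rho(a)=\log(e^a+e^{-a})$. Define $f:\{\pm1\}^n\to\mathbb R$ by \[ f(x)=\sum_{j=1}^m\rho\Big(\sum_{i=1}^n x_iJ_{ij}+g_j\Big)+h^Tx, \] and write $f(x)=\sum_{T\subseteq[n]}\hat f_T\prod_{i\in T}x_i$ (its unique multilinear expansion). Then for all distinct $i,j\in[n]$, $\hat f_{\{i,j\}}\ge0$; moreover $\hat f_{\{i,j\}}>0$ whenever there exists $k\in[m]$ with $J_{ik}>0$ and $J_{jk}>0$. *)

(* Defs.v *)
From Stdlib Require Import Reals List.
Import ListNotations.
Open Scope R_scope.

Fixpoint sumR (n : nat) (F : nat -> R) : R :=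
  match n with
  | O => 0
  | S k => sumR k F + F k
  end.

Definition sumL {A : Type} (l : list A) (F : A -> R) : R :=
  fold_right (fun a acc => F a + acc) 0 l.

Definition prodL {A : Type} (l : list A) (F : A -> R) : R :=
  fold_right (fun a acc => F a * acc) 1 l.

(* A point of {±1}^n is encoded as a list of n booleans; true = +1, false = -1. *)
Definition sgn (b : bool) : R := if b then 1 else -1.

(* coordinate x_i (0-based index i) *)
Definition xval (x : list bool) (i : nat) : R := sgn (nth i x false).

Fixpoint cube (n : nat) : list (list bool) :=
  match n with
  | O => [ [] ]
  | S k => flat_map (fun x => [true :: x; false :: x]) (cube k)
  end.

Definition rho (a : R) : R := ln (exp a + exp (- a)).

Definition frbm (n m : nat) (J : nat -> nat -> R) (h g : nat -> R)
  (x : list bool) : R :=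
  sumR m (fun k => rho (sumR n (fun i => xval x i * J i k) + g k))
  + sumR n (fun i => h i * xval x i).

(* Fourier (multilinear-expansion) coefficient of F : {±1}^n -> R on the
   set T (given as a duplicate-free list of indices < n):
   hat F_T = 2^{-n} sum_x F(x) prod_{i in T} x_i. *)
Definition fourier (n : nat) (F : list bool -> R) (T : list nat) : R :=
  / (2 ^ n) * sumL (cube n) (fun x => F x * prodL T (fun i => xval x i)).

(* Main.v *)
Require Import Defs.
From Stdlib Require Import Reals List Lra Lia Psatz.
Import ListNotations.
Open Scope R_scope.

Lemma sumL_flat (l : list (list bool)) (F : list bool -> R) :
  sumL (flat_map (fun x => [true :: x; false :: x]) l) F =
  sumL l (fun x => F (true :: x) + F (false :: x)).
Proof. induction l as [|a l IH]; simpl; [reflexivity|]. unfold sumL in *; simpl. rewrite IH. ring. Qed.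

Lemma sumL_ext {A} (l : list A) F G : (forall x, F x = G x) -> sumL l F = sumL l G.
Proof. intros H; induction l; simpl; [reflexivity|]. unfold sumL in *; simpl. rewrite H, IHl. reflexivity. Qed.

Lemma sumL_plus {A} (l : list A) F G : sumL l (fun x => F x + G x) = sumL l F + sumL l G.
Proof. induction l; unfold sumL in *; simpl; [ring|]. rewrite IHl. ring. Qed.

Lemma sumL_scal {A} (l : list A) c F : sumL l (fun x => c * F x) = c * sumL l F.
Proof. induction l; unfold sumL in *; simpl; [ring|]. rewrite IHl. ring. Qed.

Lemma sumL_pos {A} (l : list A) F : l <> [] -> (forall x, 0 < F x) -> 0 < sumL l F.
Proof.
  intros Hn H; induction l as [|a l IH]; [congruence|].
  unfold sumL in *; simpl. destruct l as [|b l'].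
  - simpl. specialize (H a). lra.
  - assert (0 < fold_right (fun a0 acc => F a0 + acc) 0 (b :: l')) by (apply IH; congruence).
    specialize (H a). lra.
Qed.

Lemma sumL_nonneg {A} (l : list A) F : (forall x, 0 <= F x) -> 0 <= sumL l F.
Proof. intros H; induction l; unfold sumL in *; simpl; [lra|]. specialize (H a). lra. Qed.

Lemma cube_ne n : cube n <> [].
Proof.
  induction n; simpl; [congruence|].
  destruct (cube n); [congruence|]. simpl. congruence.
Qed.

Fixpoint upd (y : list bool) (i : nat) (b : bool) : list bool :=
  match y, i with
  | [], O => [b]
  | [], S i' => false :: upd [] i' b
  | a :: y', O => b :: y'
  | a :: y', S i' => a :: upd y' i' b
  end.

Lemma nth_upd y i b l : nth l (upd y i b) false = if Nat.eqb l i then b else nth l y false.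
Proof.
  revert i l; induction y as [|a y IH]; intros i l.
  - revert l; induction i; intros l; destruct l; simpl; auto.
    + destruct l; reflexivity.
    + rewrite IHi. destruct (Nat.eqb l i); auto. destruct l; reflexivity.
  - destruct i, l; simpl; auto.
Qed.

Lemma xval_upd y i b l : xval (upd y i b) l = if Nat.eqb l i then sgn b else xval y l.
Proof. unfold xval. rewrite nth_upd. destruct (Nat.eqb l i); auto. Qed.

Lemma lemA n : forall i F, (i < n)%nat ->
  sumL (cube n) (fun x => F x * xval x i) =
  sumL (cube n) (fun x => (F (upd x i true) - F (upd x i false)) / 2).
Proof.
  induction n; intros i F Hi; [lia|].
  simpl cube. rewrite !sumL_flat. destruct i as [|i'].
  - apply sumL_ext. intros x. unfold xval; simpl. lra.
  - unfold xval at 1 2; simpl nth. fold (xval).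
    change (sumL (cube n) (fun x => F (true :: x) * xval x i' + F (false :: x) * xval x i') =
      sumL (cube n) (fun x => (F (true :: upd x i' true) - F (true :: upd x i' false)) / 2 +
                               (F (false :: upd x i' true) - F (false :: upd x i' false)) / 2)).
    rewrite !sumL_plus.
    rewrite (IHn i' (fun x => F (true :: x))) by lia.
    rewrite (IHn i' (fun x => F (false :: x))) by lia.
    reflexivity.
Qed.
Definition D2 (F : list bool -> R) (i j : nat) (x : list bool) : R :=
  F (upd (upd x j true) i true) - F (upd (upd x j false) i true)
  - F (upd (upd x j true) i false) + F (upd (upd x j false) i false).

Lemma lemB n i j F : (i < n)%nat -> (j < n)%nat -> i <> j ->
  sumL (cube n) (fun x => F x * prodL [i; j] (fun l => xval x l)) =
  sumL (cube n) (fun x => / 4 * D2 F i j x).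
Proof.
  intros Hi Hj Hij.
  transitivity (sumL (cube n) (fun x => (F x * xval x j) * xval x i)).
  { apply sumL_ext; intros x; unfold prodL; simpl; ring. }
  rewrite (lemA n i (fun x => F x * xval x j)) by exact Hi.
  transitivity (sumL (cube n) (fun x =>
     ((F (upd x i true) - F (upd x i false)) / 2) * xval x j)).
  { apply sumL_ext; intros x. rewrite !xval_upd.
    destruct (Nat.eqb_spec j i); [congruence|]. lra. }
  rewrite (lemA n j (fun x => (F (upd x i true) - F (upd x i false)) / 2)) by exact Hj.
  apply sumL_ext; intros x. unfold D2. lra.
Qed.

Lemma sumR_ext n F G : (forall l, (l < n)%nat -> F l = G l) -> sumR n F = sumR n G.
Proof. induction n; intros H; simpl; [reflexivity|]. rewrite IHn by (intros; apply H; lia). rewrite H by lia. reflexivity. Qed.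

Lemma sumR_point n i u v : (i < n)%nat -> (forall l, (l < n)%nat -> l <> i -> u l = v l) ->
  sumR n u = sumR n v + (u i - v i).
Proof.
  induction n; intros Hi H; [lia|]. simpl.
  destruct (Nat.eq_dec i n) as [->|Hn].
  - rewrite (sumR_ext n u v) by (intros; apply H; lia). ring.
  - rewrite IHn by (try lia; intros; apply H; lia). rewrite (H n) by lia. ring.
Qed.

Lemma lin2 n i j x a b (w : nat -> R) : (i < n)%nat -> (j < n)%nat -> i <> j ->
  sumR n (fun l => xval (upd (upd x j b) i a) l * w l) =
  sumR n (fun l => xval (upd (upd x j false) i false) l * w l)
   + (sgn a + 1) * w i + (sgn b + 1) * w j.
Proof.
  intros Hi Hj Hij.
  assert (E1 : forall l, (l < n)%nat -> l <> i ->
     xval (upd (upd x j b) i a) l * w l = xval (upd (upd x j b) i false) l * w l).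
  { intros l _ Hl; rewrite !xval_upd. destruct (Nat.eqb_spec l i). congruence. reflexivity. }
  assert (E2 : forall l, (l < n)%nat -> l <> j ->
     xval (upd (upd x j b) i false) l * w l = xval (upd (upd x j false) i false) l * w l).
  { intros l _ Hl; rewrite !xval_upd. destruct (Nat.eqb_spec l i). reflexivity.
    destruct (Nat.eqb_spec l j). congruence. reflexivity. }
  rewrite (sumR_point n i _ _ Hi E1).
  rewrite (sumR_point n j _ _ Hj E2).
  rewrite !xval_upd. rewrite Nat.eqb_refl.
  destruct (Nat.eqb_spec j i); [congruence|]. rewrite Nat.eqb_refl. simpl. ring.
Qed.

Lemma sumR_comb m a b c d : sumR m a - sumR m b - sumR m c + sumR m d =
  sumR m (fun k => a k - b k - c k + d k).
Proof. induction m; simpl; [ring|]. rewrite <- IHm. ring. Qed.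

Lemma sumR_nonneg m F : (forall k, (k < m)%nat -> 0 <= F k) -> 0 <= sumR m F.
Proof. induction m; intros H; simpl; [lra|]. assert (0 <= F m) by (apply H; lia).
  assert (0 <= sumR m F) by (apply IHm; intros; apply H; lia). lra. Qed.

Lemma sumR_pos m F k : (forall k, (k < m)%nat -> 0 <= F k) -> (k < m)%nat -> 0 < F k -> 0 < sumR m F.
Proof. induction m; intros H Hk Hp; simpl; [lia|].
  assert (0 <= F m) by (apply H; lia).
  assert (0 <= sumR m F) by (apply sumR_nonneg; intros; apply H; lia).
  destruct (Nat.eq_dec k m) as [->|]; [lra|].
  assert (0 < sumR m F). { apply IHm. intros; apply H; lia. lia. exact Hp. } lra. Qed.

Lemma exp_ge1 A : 0 <= A -> 1 <= exp A.
Proof. intros H. pose proof (exp_ineq1_le A). lra. Qed.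
Lemma exp_gt1 A : 0 < A -> 1 < exp A.
Proof. intros H. pose proof (exp_ineq1_le A). lra. Qed.

Lemma rho_prod c A B :
  rho (c + A + B) - rho (c + B) - rho (c + A) + rho c =
  ln ((exp (c+A+B) + exp (-(c+A+B))) * (exp c + exp (-c)))
  - ln ((exp (c+B) + exp (-(c+B))) * (exp (c+A) + exp (-(c+A)))).
Proof.
  unfold rho. pose proof (exp_pos (c+A+B)). pose proof (exp_pos (-(c+A+B))).
  pose proof (exp_pos (c+A)). pose proof (exp_pos (-(c+A))).
  pose proof (exp_pos (c+B)). pose proof (exp_pos (-(c+B))).
  pose proof (exp_pos c). pose proof (exp_pos (-c)).
  rewrite !ln_mult by lra. ring.
Qed.

Lemma prod_diff c A B :
  (exp (c+A+B) + exp (-(c+A+B))) * (exp c + exp (-c))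
  - (exp (c+B) + exp (-(c+B))) * (exp (c+A) + exp (-(c+A)))
  = (exp A * exp A - 1) * (exp B * exp B - 1) / (exp A * exp B).
Proof.
  rewrite !exp_Ropp, !exp_plus.
  pose proof (exp_pos A). pose proof (exp_pos B). pose proof (exp_pos c).
  field. repeat split; lra.
Qed.

Lemma rho_conv c A B : 0 <= A -> 0 <= B ->
  0 <= rho (c + A + B) - rho (c + B) - rho (c + A) + rho c /\
  (0 < A -> 0 < B -> 0 < rho (c + A + B) - rho (c + B) - rho (c + A) + rho c).
Proof.
  intros HA HB. rewrite rho_prod.
  pose proof (prod_diff c A B) as E.
  set (X := (exp (c+A+B) + exp (-(c+A+B))) * (exp c + exp (-c))) in *.
  set (Y := (exp (c+B) + exp (-(c+B))) * (exp (c+A) + exp (-(c+A)))) in *.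
  assert (HY : 0 < Y).
  { unfold Y. pose proof (exp_pos (c+A)). pose proof (exp_pos (-(c+A))).
    pose proof (exp_pos (c+B)). pose proof (exp_pos (-(c+B))). nra. }
  pose proof (exp_ge1 A HA). pose proof (exp_ge1 B HB).
  assert (Hq : 0 < exp A * exp B) by nra.
  assert (HXY : 0 <= X - Y).
  { rewrite E. unfold Rdiv. apply Rmult_le_pos. apply Rmult_le_pos; nra. left; apply Rinv_0_lt_compat; lra. }
  split.
  - destruct (Req_dec X Y) as [->|Hne]; [lra|].
    pose proof (ln_increasing Y X HY ltac:(lra)). lra.
  - intros HA' HB'. pose proof (exp_gt1 A HA'). pose proof (exp_gt1 B HB').
    assert (0 < X - Y).
    { rewrite E. unfold Rdiv. apply Rmult_lt_0_compat. apply Rmult_lt_0_compat; nra. apply Rinv_0_lt_compat; lra. }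
    pose proof (ln_increasing Y X HY ltac:(lra)). lra.
Qed.

Lemma frbm_upd n m J h g i j x a b : (i < n)%nat -> (j < n)%nat -> i <> j ->
  frbm n m J h g (upd (upd x j b) i a) =
  sumR m (fun k => rho ((sumR n (fun l => xval (upd (upd x j false) i false) l * J l k) + g k)
                        + (sgn a + 1) * J i k + (sgn b + 1) * J j k))
  + sumR n (fun l => xval (upd (upd x j false) i false) l * h l)
  + (sgn a + 1) * h i + (sgn b + 1) * h j.
Proof.
  intros Hi Hj Hij. unfold frbm.
  rewrite (sumR_ext m _ (fun k => rho ((sumR n (fun l => xval (upd (upd x j false) i false) l * J l k) + g k)
                        + (sgn a + 1) * J i k + (sgn b + 1) * J j k))).
  2:{ intros k _. rewrite (lin2 n i j x a b (fun l => J l k)) by auto. f_equal. ring. }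
  rewrite (sumR_ext n (fun l => h l * _) (fun l => xval (upd (upd x j b) i a) l * h l))
    by (intros; ring).
  rewrite (lin2 n i j x a b h) by auto. ring.
Qed.

Theorem lemma5p2 (n m : nat) (J : nat -> nat -> R) (h g : nat -> R)
  (HJ : forall a k, (a < n)%nat -> (k < m)%nat -> 0 <= J a k)
  (i j : nat) (Hi : (i < n)%nat) (Hj : (j < n)%nat) (Hij : i <> j) :
  0 <= fourier n (frbm n m J h g) [i; j] /\
  ((exists k, (k < m)%nat /\ 0 < J i k /\ 0 < J j k) ->
     0 < fourier n (frbm n m J h g) [i; j]).
Proof.
  unfold fourier. rewrite (lemB n i j) by auto.
  set (C := fun x k => sumR n (fun l => xval (upd (upd x j false) i false) l * J l k) + g k).
  set (T := fun x k => rho (C x k + 2 * J i k + 2 * J j k) - rho (C x k + 2 * J j k)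
                        - rho (C x k + 2 * J i k) + rho (C x k)).
  assert (ED : forall x, D2 (frbm n m J h g) i j x = sumR m (T x)).
  { intros x. unfold D2. rewrite !frbm_upd by auto. simpl sgn.
    match goal with |- ?S1 + ?a1 + ?b1 + ?c1 - (?S2 + ?a2 + ?b2 + ?c2) - (?S3 + ?a3 + ?b3 + ?c3)
       + (?S4 + ?a4 + ?b4 + ?c4) = _ =>
       transitivity (S1 - S2 - S3 + S4) end. ring.
    rewrite sumR_comb. apply sumR_ext. intros k _. unfold T, C.
    set (s := sumR n (fun l : nat => xval (upd (upd x j false) i false) l * J l k)).
    replace (s + g k + (1 + 1) * J i k + (1 + 1) * J j k) with (s + g k + 2 * J i k + 2 * J j k) by ring.
    replace (s + g k + (1 + 1) * J i k + (-1 + 1) * J j k) with (s + g k + 2 * J i k) by ring.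
    replace (s + g k + (-1 + 1) * J i k + (1 + 1) * J j k) with (s + g k + 2 * J j k) by ring.
    replace (s + g k + (-1 + 1) * J i k + (-1 + 1) * J j k) with (s + g k) by ring.
    ring. }
  assert (HT : forall x k, (k < m)%nat -> 0 <= T x k /\ (0 < J i k -> 0 < J j k -> 0 < T x k)).
  { intros x k Hk. pose proof (HJ i k Hi Hk). pose proof (HJ j k Hj Hk).
    destruct (rho_conv (C x k) (2 * J i k) (2 * J j k)) as [H1 H2]; try lra.
    unfold T. replace (C x k + 2 * J i k + 2 * J j k) with (C x k + 2 * J i k + 2 * J j k) by ring.
    split; [lra|]. intros; apply H2; lra. }
  pose proof (pow_lt 2 n ltac:(lra)) as H2n.
  split.
  - apply Rmult_le_pos; [left; apply Rinv_0_lt_compat; lra|].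
    apply sumL_nonneg; intros x. rewrite ED. apply Rmult_le_pos; [lra|].
    apply sumR_nonneg. intros k Hk. apply (HT x k Hk).
  - intros [k [Hk [Hik Hjk]]].
    apply Rmult_lt_0_compat; [apply Rinv_0_lt_compat; lra|].
    apply sumL_pos; [apply cube_ne|]. intros x. rewrite ED. apply Rmult_lt_0_compat; [lra|].
    apply (sumR_pos m (T x) k); auto. intros k' Hk'; apply (HT x k' Hk').
    apply (HT x k Hk); auto.
Qed.
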